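(* Let $n\ge 2$ and let $(G(k))_{k\in\mathbb{N}}$ be a sequence of digraphs on $\mathcal{V}=\{1,\dots,n\}$ with knowledge sets evolving by the flooding update described in the context. Define $$\nu(k)=\begin{cases} k+2 & \text{if } k\le\lceil n/2\rceil-1,\\ n & \text{if } k\ge\lceil n/2\rceil.\end{cases}$$ If for every $k\in\{0,1,\dots,n-2\}$ the digraph $G(k)$ contains $\nu(k)(k)$ (i.e. every node has, at time $k$, a closed input-cord of cardinality greater than $\nu(k)-2$), then $|\{i\in\mathcal{V}: d_w\in\mathcal{K}_i(k+1)\}|\ge k+2$ for all $w\in\mathcal{V}$ and all $k\in\{0,1,\dots,n-2\}$.
   Context: Network: $\mathcal{V}=\{1,\dots,n\}$; node $i$ holds initial data $d_i\in\mathbb{R}$, pairwise distinct. At discrete times $k\in\mathbb{N}$ communication follows digraph $G(k)=(\mathcal{V},\mathcal{E}(k))$; node $i$ sends to $j$ at time $k$ iff $(i,j)\in\mathcal{E}(k)$. Knowledge sets: $\mathcal{K}_i(0)=\{d_i\}$ and $\mathcal{K}_j(k+1)=\mathcal{K}_j(k)\cup\bigcup_{i:(i,j)\in\mathcal{E}(k)}\mathcal{K}_i(k)$. An input-cord to node $i$ at time $k$ is an ordered list $(\mathcal{I}^i_1,\dots,\mathcal{I}^i_m)$ of pairwise distinct nodes of $\mathcal{V}\setminus\{i\}$ with $(\mathcal{I}^i_j,\mathcal{I}^i_{j+1})\in\mathcal{E}(k)$ for $j=1,\dots,m-1$ and $(\mathcal{I}^i_m,i)\in\mathcal{E}(k)$;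 its cardinality is $m$. It is closed if moreover $(i,\mathcal{I}^i_1)\in\mathcal{E}(k)$. For an integer $\chi$, node $i$ is contained in a $\chi(k)$-cycle if it has at time $k$ a closed input-cord of cardinality greater than $\chi-2$; $G(k)$ contains $\chi(k)$ if every node is contained in a $\chi(k)$-cycle. *)

(* Defs.v *)
From mathcomp Require Import all_boot all_order.
From mathcomp Require Import reals.
Set Implicit Arguments. Unset Strict Implicit. Unset Printing Implicit Defensive.

(* Nodes are 'I_n (i.e. {0,...,n-1} standing for {1,...,n}).
   A time-varying digraph is E : nat -> rel 'I_n, with E k i j meaning (i,j) in E(k). *)

Fixpoint know (T : eqType) (n : nat) (E : nat -> rel 'I_n) (d : 'I_n -> T)
  (k : nat) (j : 'I_n) : pred T :=
  match k with
  | 0 => fun x => x == d j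
  | k'.+1 => fun x => know E d k' j x || [exists i, E k' i j && know E d k' i x]
  end.

(* Cardinality = size. *)
Definition closed_input_cord (n : nat) (E : nat -> rel 'I_n) (k : nat)
  (i : 'I_n) (c : seq 'I_n) : bool :=
  if c is x :: s then
    [&& uniq c, i \notin c, path (E k) x s, E k (last x s) i & E k i x]
  else false.

Definition in_chi_cycle (n : nat) (E : nat -> rel 'I_n) (k chi : nat) (i : 'I_n) : Prop :=
  exists c, closed_input_cord E k i c /\ (chi - 2 < size c)%N.

Definition contains_chi (n : nat) (E : nat -> rel 'I_n) (k chi : nat) : Prop :=
  forall i : 'I_n, in_chi_cycle E k chi i.

Definition nu (n k : nat) : nat := if (k <= uphalf n - 1)%N then k.+2 else n.

(* Main.v *)
Require Import Defs.
From mathcomp Require Import all_boot all_order.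
From mathcomp Require Import reals.
From mathcomp Require Import zify.
From Stdlib Require Import Lia.

Lemma know_mono (T : eqType) (n : nat) (E : nat -> rel 'I_n) (d : 'I_n -> T) k j x :
  know E d k j x -> know E d k.+1 j x.
Proof. by move=> h /=; rewrite h. Qed.

Lemma path_cross (T : finType) (e : rel T) (S : {set T}) x p :
  path e x p -> x \in S -> ~~ all (mem S) p ->
  exists a b, [/\ a \in S, b \notin S & e a b].
Proof.
elim: p x => [|y p IH] x //= /andP[exy hp] xS.
case yS: (y \in S) => /=.
  by move=> h; apply: (IH y hp yS h).
by move=> _; exists x, y; rewrite yS.
Qed.

Theorem theorem2 (R : realType) (n : nat) (E : nat -> rel 'I_n) (d : 'I_n -> R) :
  (2 <= n)%N ->
  injective d ->
  (forall k : nat, (k <= n - 2)%N -> contains_chi E k (nu n k)) ->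
  forall (w : 'I_n) (k : nat), (k <= n - 2)%N ->
    (k.+2 <= #|[set i : 'I_n | know E d k.+1 i (d w)]|)%N.
Proof.
move=> n2 _ hchi w.
set S := fun k => [set i : 'I_n | know E d k i (d w)].
have wS : forall k, w \in S k.
  elim=> [|k IH]; first by rewrite inE /=.
  by rewrite inE; apply: know_mono; rewrite inE in IH.
have sub : forall k, S k \subset S k.+1.
  by move=> k; apply/subsetP=> x; rewrite !inE; apply: know_mono.
suff P : forall k, (k <= n - 1)%N -> (k.+1 <= #|S k|)%N.
  by move=> k hk; apply: P; lia.
elim=> [|k IH] hk.
  by rewrite card_gt0; apply/set0Pn; exists w.
have hk' : (k <= n - 2)%N by lia.
have IH' := IH (ltnW (leq_trans hk (leqnn _))).
case: (leqP k.+2 #|S k|) => hlt.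
  by apply: leq_trans hlt (subset_leq_card (sub k)).
have eqS : #|S k| = k.+1 by apply/eqP; rewrite eqn_leq IH' -ltnS hlt.
have [c [hc hsz]] := hchi k hk' w.
have nuk : (k.+2 <= nu n k)%N by rewrite /nu; case: ifP => _ //; lia.
case: c hc hsz => [|x s] //= /and5P[hu hw hp hl hwx] hsz.
have notall : ~~ all (mem (S k)) (x :: s).
  apply/negP=> hall.
  have : (#|w :: x :: s| <= #|S k|)%N.
    apply: subset_leq_card; apply/subsetP=> y; rewrite inE => /orP[/eqP->//|ys].
    by move/allP: hall => /(_ y ys).
  have /card_uniqP -> : uniq (w :: x :: s) by rewrite /= hw hu.
  rewrite eqS /=; lia.
have hpath : path (E k) w (x :: s) by rewrite /= hwx hp.
have [a [b [aS bS eab]]] := path_cross _ _ _ _ _ hpath (wS k) notall.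
have bS' : b \in S k.+1.
  by rewrite inE /=; apply/orP; right; apply/existsP; exists a; rewrite eab; rewrite inE in aS.
have hpr : S k \proper S k.+1 by apply/properP; split; [exact: (sub k) | exists b].
have := proper_card hpr; rewrite eqS; exact.
Qed.
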